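(* Let $O$ be a unitary operator and $P$ a self-adjoint projection on a finite-dimensional Hilbert space such that $P(O-\mathrm{Id})=O-\mathrm{Id}$ and $[P,O]=0$. Then for any two density matrices $\rho,\sigma$, $$\sqrt{F}(\rho,\sigma)-\sqrt{F}(\rho,O\sigma O^\dagger)\leq 2\sqrt{\mathrm{tr}(P\rho)\,\mathrm{tr}(P\sigma)}.$$
   Context: $\sqrt{F}(\rho,\sigma)=\mathrm{tr}\sqrt{\rho^{1/2}\sigma\rho^{1/2}}$ is the root fidelity of density matrices. *)

(* Defs.v *)
(* finite-dimensional complex Hilbert space = C^n,
   C an algebraically closed numeric field with conjugation (e.g. algC). *)
From HB Require Import structures.
From mathcomp Require Import all_boot all_order all_algebra.
Set Implicit Arguments. Unset Strict Implicit. Unset Printing Implicit Defensive.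
Import Order.TTheory GRing.Theory Num.Theory.
Local Open Scope ring_scope.

Section Defs.
Variable C : numClosedFieldType.

Definition adjmx m n (A : 'M[C]_(m, n)) : 'M[C]_(n, m) := map_mx Num.conj (A^T).

Definition psdmx n (A : 'M[C]_n) : Prop :=
  adjmx A = A /\ forall v : 'rV[C]_n, 0 <= (v *m A *m adjmx v) 0 0.

Definition density n (A : 'M[C]_n) : Prop := psdmx A /\ \tr A = 1.

Definition sa_projection n (P : 'M[C]_n) : Prop := adjmx P = P /\ P *m P = P.

Definition sqrtm n (A : 'M[C]_n) : 'M[C]_n :=
  let U := spectralmx A in
  adjmx U *m diag_mx (map_mx sqrtC (spectral_diag A)) *m U.

Definition root_fidelity n (rho sigma : 'M[C]_n) : C :=
  \tr (sqrtm (sqrtm rho *m sigma *m sqrtm rho)).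

End Defs.

(* Main.v *)
Require Import Defs.
From HB Require Import structures.
From mathcomp Require Import all_boot all_order all_algebra.
Import Order.TTheory GRing.Theory Num.Theory.
Local Open Scope ring_scope.

Section Aux.
Variable C : numClosedFieldType.

Lemma adjmxE m n (A : 'M[C]_(m, n)) i j : adjmx A i j = (A j i)^*.
Proof. by rewrite !mxE. Qed.

Lemma adjmxM m n p (A : 'M[C]_(m, n)) (B : 'M[C]_(n, p)) :
  adjmx (A *m B) = adjmx B *m adjmx A.
Proof. by rewrite /adjmx trmx_mul map_mxM. Qed.

Lemma adjmxK m n (A : 'M[C]_(m, n)) : adjmx (adjmx A) = A.
Proof. by apply/matrixP => i j; rewrite !mxE conjCK. Qed.

Lemma adjmxB m n (A B : 'M[C]_(m, n)) : adjmx (A - B) = adjmx A - adjmx B.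
Proof. by apply/matrixP => i j; rewrite !mxE rmorphB. Qed.

Lemma adj_diag n (d : 'rV[C]_n) : adjmx (diag_mx d) = diag_mx (map_mx Num.conj d).
Proof. by rewrite /adjmx tr_diag_mx map_diag_mx. Qed.

Lemma unitary_adjR n (U : 'M[C]_n) : U \is unitarymx -> U *m adjmx U = 1%:M.
Proof. by move/unitarymxP. Qed.

Lemma unitary_adjL n (U : 'M[C]_n) : U \is unitarymx -> adjmx U *m U = 1%:M.
Proof. by move/unitary_adjR/mulmx1C. Qed.

Lemma trNorm m n (A : 'M[C]_(m, n)) :
  \tr (A *m adjmx A) = \sum_i \sum_j `|A i j| ^+ 2.
Proof.
apply: eq_bigr => i _; rewrite mxE; apply: eq_bigr => j _.
by rewrite !mxE normCK.
Qed.

Lemma CS_sum (I : finType) (f g : I -> C) :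
  `|\sum_i f i * g i| <= sqrtC (\sum_i `|f i| ^+ 2) * sqrtC (\sum_i `|g i| ^+ 2).
Proof.
pose u := \row_(k < #|I|) f (enum_val k).
pose v := \row_(k < #|I|) (g (enum_val k))^*.
have [H _] := CauchySchwarz_sqrt (@dotmx C #|I|) u v.
rewrite /= !dotmxE /u /v !mxE in H.
have E (F : I -> C) : \sum_i F i = \sum_(k < #|I|) F (enum_val k).
  by rewrite -big_enum_val; apply: eq_bigl => x; rewrite unfold_in.
rewrite !E.
rewrite [X in `|X| <= _](eq_bigr (fun j => f (enum_val j) * g (enum_val j))) in H; last first.
  by move=> j _; rewrite !mxE conjCK.
rewrite [X in sqrtC X * _](eq_bigr (fun j => `|f (enum_val j)| ^+ 2)) in H; last first.
  by move=> j _; rewrite !mxE normCK.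
rewrite [X in _ * sqrtC X](eq_bigr (fun j => `|g (enum_val j)| ^+ 2)) in H; last first.
  by move=> j _; rewrite !mxE normCK conjCK mulrC.
exact: H.
Qed.


Lemma CS_tr n (X Y : 'M[C]_n) :
  `|\tr (X *m Y)| <= sqrtC (\tr (X *m adjmx X)) * sqrtC (\tr (adjmx Y *m Y)).
Proof.
have e1 : \tr (X *m Y) = \sum_(p : 'I_n * 'I_n) X p.1 p.2 * Y p.2 p.1.
  rewrite -(pair_bigA _ (fun i j => X i j * Y j i)); apply: eq_bigr => i _.
  by rewrite mxE.
have e2 : \tr (X *m adjmx X) = \sum_(p : 'I_n * 'I_n) `|X p.1 p.2| ^+ 2.
  by rewrite trNorm -(pair_bigA _ (fun i j => `|X i j| ^+ 2)).
have e3 : \tr (adjmx Y *m Y) = \sum_(p : 'I_n * 'I_n) `|Y p.2 p.1| ^+ 2.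
  rewrite -(pair_bigA _ (fun i j => `|Y j i| ^+ 2)); apply: eq_bigr => i _.
  by rewrite mxE; apply: eq_bigr => k _; rewrite !mxE normCK mulrC.
rewrite e1 e2 e3.
have H := (@CS_sum _ (fun p : ('I_n * 'I_n)%type => X p.1 p.2) (fun p : ('I_n * 'I_n)%type => Y p.2 p.1)).
exact H.
Qed.

Lemma tstar m n (A : 'M[C]_(m, n)) : (A ^t* )%sesqui = adjmx A.
Proof. by []. Qed.

Lemma spec_dec n (M : 'M[C]_n) : M \is normalmx ->
  M = adjmx (spectralmx M) *m diag_mx (spectral_diag M) *m spectralmx M.
Proof.
move/orthomx_spectralP => {1}->.
by rewrite invmx_unitary ?spectral_unitarymx.
Qed.

Lemma tr_sqrtm n (M : 'M[C]_n) :
  \tr (sqrtm M) = \sum_i sqrtC (spectral_diag M 0 i).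
Proof.
rewrite /sqrtm mxtrace_mulC mulmxA unitary_adjR ?spectral_unitarymx //.
by rewrite mul1mx mxtrace_diag; apply: eq_bigr => i _; rewrite mxE.
Qed.


End Aux.
Arguments adjmxE {C m n} A i j.
Arguments adjmxM {C m n p} A B.
Arguments adjmxK {C m n} A.
Arguments adjmxB {C m n} A B.
Arguments adj_diag {C n} d.
Arguments unitary_adjR {C n U}.
Arguments unitary_adjL {C n U}.
Arguments trNorm {C m n} A.
Arguments CS_sum {C I} f g.
Arguments CS_tr {C n} X Y.
Arguments tstar {C m n} A.
Arguments spec_dec {C n M}.
Arguments tr_sqrtm {C n} M.

Section Main.
Variable C : numClosedFieldType.
Variable n : nat.

Lemma gram_normal (X : 'M[C]_n) : X *m adjmx X \is normalmx.
Proof. by apply/normalmxP; rewrite tstar adjmxM adjmxK. Qed.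

Lemma gram_diag (X : 'M[C]_n) :
  (spectralmx (X *m adjmx X) *m X) *m adjmx (spectralmx (X *m adjmx X) *m X)
  = diag_mx (spectral_diag (X *m adjmx X)).
Proof.
set U := spectralmx _; set d := spectral_diag _.
have hU : U \is unitarymx by apply: spectral_unitarymx.
rewrite adjmxM !mulmxA -(mulmxA U) (spec_dec (gram_normal X)) -/U -/d.
by rewrite !mulmxA unitary_adjR // mul1mx -mulmxA unitary_adjR // mulmx1.
Qed.

Lemma gram_d (X : 'M[C]_n) i :
  spectral_diag (X *m adjmx X) 0 i
  = \sum_k `|(spectralmx (X *m adjmx X) *m X) i k| ^+ 2.
Proof.
have := congr1 (fun M : 'M[C]_n => M i i) (gram_diag X).
rewrite /= [in RHS]mxE eqxx mulr1n => <-.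
by rewrite mxE; apply: eq_bigr => k _; rewrite !mxE normCK.
Qed.

Lemma gram_d_ge0 (X : 'M[C]_n) i : 0 <= spectral_diag (X *m adjmx X) 0 i.
Proof. by rewrite gram_d sumr_ge0 // => k _; rewrite exprn_ge0. Qed.

Definition Nf (X : 'M[C]_n) := \sum_i sqrtC (spectral_diag (X *m adjmx X) 0 i).

Lemma Nf_ge0 (X : 'M[C]_n) : 0 <= Nf X.
Proof. by apply: sumr_ge0 => i _; rewrite sqrtC_ge0 gram_d_ge0. Qed.

Definition contraction (W : 'M[C]_n) := forall x : 'cV[C]_n,
  \sum_k `|(W *m x) k 0| ^+ 2 <= \sum_k `|x k 0| ^+ 2.

Lemma upper (W X : 'M[C]_n) : contraction W -> `|\tr (W *m X)| <= Nf X.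
Proof.
move=> hW; rewrite /Nf.
set U := spectralmx (X *m adjmx X); set d := spectral_diag (X *m adjmx X).
have hU : U \is unitarymx by apply: spectral_unitarymx.
set A := U *m X.
have -> : \tr (W *m X) = \tr (A *m (W *m adjmx U)).
  by rewrite [RHS]mxtrace_mulC /A !mulmxA -(mulmxA W) unitary_adjL // mulmx1.
set W2 := W *m adjmx U.
rewrite /mxtrace (le_trans (ler_norm_sum _ _ _)) //.
apply: ler_sum => i _; rewrite mxE.
apply: (le_trans (CS_sum (fun k => A i k) (fun k => W2 k i))).
have hd : 0 <= sqrtC (d 0 i) by rewrite sqrtC_ge0 gram_d_ge0.
rewrite gram_d -/U -/A.
rewrite -[X in _ <= X]mulr1; apply: ler_wpM2l => //.
  by rewrite sqrtC_ge0 sumr_ge0 // => k _; rewrite exprn_ge0.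
rewrite -sqrtC1 ler_sqrtC ?nnegrE ?ler01 //; last first.
  by rewrite sumr_ge0 // => k _; rewrite exprn_ge0.
have := hW (col i (adjmx U)).
have -> : \sum_k `|(W *m col i (adjmx U)) k 0| ^+ 2 = \sum_k `|W2 k i| ^+ 2.
  by apply: eq_bigr => k _; rewrite !mxE; congr (`|_| ^+ 2); apply: eq_bigr => j _; rewrite !mxE.
move/le_trans; apply.
have := congr1 (fun M : 'M[C]_n => M i i) (unitary_adjR hU).
rewrite /= [in RHS]mxE eqxx mulr1n => <-.
rewrite mxE le_eqVlt; apply/orP; left; apply/eqP; apply: eq_bigr => k _.
by rewrite !mxE normCK conjCK mulrC.
Qed.


Lemma vnorm (x : 'cV[C]_n) : \sum_k `|x k 0| ^+ 2 = (adjmx x *m x) 0 0.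
Proof. by rewrite mxE; apply: eq_bigr => k _; rewrite !mxE normCK mulrC. Qed.

Lemma div_sqrt (x : C) : x * (sqrtC x)^-1 = sqrtC x.
Proof.
have [->|x0] := eqVneq x 0; first by rewrite sqrtC0 mul0r.
have s0 : sqrtC x != 0 by rewrite sqrtC_eq0.
by rewrite -{1}(sqrtCK x) expr2 mulfK.
Qed.

Lemma attain (X : 'M[C]_n) : exists W, contraction W /\ \tr (W *m X) = Nf X.
Proof.
set U := spectralmx (X *m adjmx X); set d := spectral_diag (X *m adjmx X).
have hU : U \is unitarymx by apply: spectral_unitarymx.
set A := U *m X.
have hAA : A *m adjmx A = diag_mx d := gram_diag X.
pose e := \row_i (sqrtC (d 0 i))^-1.
exists (adjmx A *m diag_mx e *m U); split.
- move=> x; rewrite !vnorm.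
  set y := U *m x.
  pose c := \row_k ((e 0 k)^* * d 0 k * e 0 k).
  have hc : diag_mx (map_mx Num.conj e) *m (A *m adjmx A) *m diag_mx e = diag_mx c.
    by rewrite hAA !mulmx_diag; congr diag_mx; apply/rowP => k; rewrite !mxE.
  have -> : adjmx (adjmx A *m diag_mx e *m U *m x) *m (adjmx A *m diag_mx e *m U *m x)
      = adjmx y *m diag_mx c *m y.
    rewrite -hc /y /A !adjmxM !adjmxK adj_diag !mulmxA.
    by [].
  have -> : adjmx x *m x = adjmx y *m y.
    by rewrite /y adjmxM mulmxA -(mulmxA _ (adjmx U)) unitary_adjL // mulmx1.
  clearbody y.
  rewrite mul_mx_diag !mxE; apply: ler_sum => k _; rewrite !mxE.
  have hy : 0 <= (y k 0)^* * y k 0 by rewrite mulrC -normCK exprn_ge0.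
  have [dk0|dk0] := eqVneq (d 0 k) 0.
    by rewrite dk0 mulr0 mul0r mulr0 mul0r.
  have hs : 0 < sqrtC (d 0 k).
    by rewrite lt_def sqrtC_eq0 dk0 sqrtC_ge0 gram_d_ge0.
  have hc1 : ((sqrtC (d 0 k))^-1)^* * d 0 k / sqrtC (d 0 k) = 1.
    rewrite geC0_conj ?invr_ge0 ?ltW //.
    by rewrite -{2}(sqrtCK (d 0 k)) expr2 mulrA mulVf ?gt_eqF // mul1r divff ?gt_eqF.
  by rewrite hc1 mulr1.
- rewrite -mulmxA -/A mxtrace_mulC mulmxA hAA mulmx_diag mxtrace_diag.
  by apply: eq_bigr => i _; rewrite !mxE div_sqrt.
Qed.


Lemma frob_contr (W Z : 'M[C]_n) : contraction W ->
  \tr ((W *m Z) *m adjmx (W *m Z)) <= \tr (Z *m adjmx Z).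
Proof.
move=> hW; rewrite !trNorm exchange_big [X in _ <= X]exchange_big /=.
apply: ler_sum => j _.
have := hW (col j Z).
have -> : \sum_k `|(W *m col j Z) k 0| ^+ 2 = \sum_i `|(W *m Z) i j| ^+ 2.
  by apply: eq_bigr => k _; rewrite !mxE; congr (`|_| ^+ 2); apply: eq_bigr => l _; rewrite !mxE.
have -> // : \sum_k `|col j Z k 0| ^+ 2 = \sum_i `|Z i j| ^+ 2.
by apply: eq_bigr => k _; rewrite !mxE.
Qed.

Lemma tr_gram_ge0 (K : 'M[C]_n) : 0 <= \tr (K *m adjmx K).
Proof.
by rewrite trNorm sumr_ge0 // => i _; rewrite sumr_ge0 // => j _; rewrite exprn_ge0.
Qed.

Lemma psd_normal (A : 'M[C]_n) : psdmx A -> A \is normalmx.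
Proof. by case=> hA _; apply/normalmxP; rewrite tstar hA. Qed.

Lemma psd_d_ge0 (A : 'M[C]_n) i : psdmx A -> 0 <= spectral_diag A 0 i.
Proof.
move=> hP; have [hA hq] := hP.
set U := spectralmx A; set d := spectral_diag A.
have hU : U \is unitarymx by apply: spectral_unitarymx.
have E := spec_dec (psd_normal _ hP).
have : U *m A *m adjmx U = diag_mx d.
  rewrite {1}E -/U -/d !mulmxA unitary_adjR // mul1mx -mulmxA unitary_adjR //.
  by rewrite mulmx1.
move/(congr1 (fun M : 'M[C]_n => M i i)); rewrite /= [in RHS]mxE eqxx mulr1n => <-.
have := hq (row i U).
have -> // : (row i U *m A *m adjmx (row i U)) 0 0 = (U *m A *m adjmx U) i i.
rewrite !mxE; apply: eq_bigr => j _; rewrite !mxE; congr (_ * _).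
by apply: eq_bigr => l _; rewrite !mxE.
Qed.

Lemma sqrtm_adj (A : 'M[C]_n) : psdmx A -> adjmx (sqrtm A) = sqrtm A.
Proof.
move=> hP; rewrite /sqrtm !adjmxM adjmxK adj_diag !mulmxA.
congr (_ *m _ *m _); congr diag_mx; apply/rowP => i.
by rewrite !mxE geC0_conj // sqrtC_ge0 (psd_d_ge0 _ _ hP).
Qed.

Lemma sqrtm_sq (A : 'M[C]_n) : psdmx A -> sqrtm A *m sqrtm A = A.
Proof.
move=> hP; rewrite /sqrtm.
have hU : spectralmx A \is unitarymx by apply: spectral_unitarymx.
rewrite !mulmxA -(mulmxA _ (spectralmx A) (adjmx (spectralmx A))) unitary_adjR //.
rewrite mulmx1 -(mulmxA _ (diag_mx _) (diag_mx _)) mulmx_diag.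
have -> : \row_j ((spectral_diag A ^ sqrtC)%sesqui 0 j * (spectral_diag A ^ sqrtC)%sesqui 0 j)
   = spectral_diag A.
  by apply/rowP => j; rewrite !mxE -expr2 sqrtCK.
exact: (esym (spec_dec (psd_normal _ hP))).
Qed.

End Main.
Arguments Nf {C n} X.
Arguments contraction {C n} W.
Arguments upper {C n} W X.
Arguments attain {C n} X.
Arguments frob_contr {C n} W Z.
Arguments tr_gram_ge0 {C n} K.
Arguments sqrtm_adj {C n A}.
Arguments sqrtm_sq {C n A}.
Arguments Nf_ge0 {C n} X.


Theorem lemma8 (C : numClosedFieldType) (n : nat) (O P rho sigma : 'M[C]_n) :
  O \is unitarymx ->
  sa_projection P ->
  P *m (O - 1%:M) = O - 1%:M ->
  P *m O = O *m P ->
  density rho -> density sigma ->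
  root_fidelity rho sigma - root_fidelity rho (O *m sigma *m adjmx O)
    <= 2 * sqrtC (\tr (P *m rho) * \tr (P *m sigma)).
Proof.
move=> hO [hPa hPP] hPO hcomm [hrho _] [hsig _].
rewrite /root_fidelity.
have hRa := sqrtm_adj hrho; have hRR := sqrtm_sq hrho.
have hSa := sqrtm_adj hsig; have hSS := sqrtm_sq hsig.
set R := sqrtm rho in hRa hRR *; set S := sqrtm sigma in hSa hSS *.
have E1 : R *m sigma *m R = (R *m S) *m adjmx (R *m S).
  by rewrite adjmxM hSa hRa mulmxA -(mulmxA R S S) hSS.
have E2 : R *m (O *m sigma *m adjmx O) *m R
    = (R *m O *m S) *m adjmx (R *m O *m S).
  by rewrite (adjmxM (R *m O) S) (adjmxM R O) hSa hRa -hSS !mulmxA.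
rewrite E1 E2 !tr_sqrtm.
change (Nf (R *m S) - Nf (R *m O *m S) <= 2 * sqrtC (\tr (P *m rho) * \tr (P *m sigma))).
clearbody R S.
have [W [hW hWA]] := attain (R *m S).
have hB := upper W (R *m O *m S) hW.
set A := R *m S in hWA *; set B := R *m O *m S in hB *.
apply: (@le_trans _ _ (`|\tr (W *m A) - \tr (W *m B)|)).
  apply: (@le_trans _ _ (Nf A - `|\tr (W *m B)|)).
    by rewrite lerD2l lerN2.
  rewrite hWA -{1}(ger0_norm (Nf_ge0 A)) -(normrN (\tr (W *m B))).
  exact: lerB_normD.
have h1 : (O - 1%:M) *m P = O - 1%:M.
  by rewrite mulmxBl mul1mx -hcomm -[X in _ - X]mulmx1 -mulmxBr hPO.
have h2 : P *m O *m P - P *m P = O - 1%:M.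
  by rewrite -mulmxA -mulmxBr -[X in _ - X]mul1mx -mulmxBl h1 hPO.
have hI : 1%:M - O = P *m P - P *m O *m P by rewrite -opprB -h2 opprB.
set X := W *m R *m P; set Y1 := P *m S; set Y2 := O *m P *m S.
have k1 : W *m A - W *m B = W *m R *m (1%:M - O) *m S.
  by rewrite /A /B mulmxBr mulmxBl mulmx1 !mulmxA.
have k2 : X *m Y1 - X *m Y2 = W *m R *m (P *m P - P *m O *m P) *m S.
  by rewrite /X /Y1 /Y2 mulmxBr mulmxBl !mulmxA.
have -> : \tr (W *m A) - \tr (W *m B) = \tr (X *m Y1) - \tr (X *m Y2).
  by rewrite -!raddfB /= !mulmxBr k1 hI -k2.
set a := \tr (P *m rho); set b := \tr (P *m sigma).
have ha : \tr ((R *m P) *m adjmx (R *m P)) = a.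
  rewrite adjmxM hPa hRa -mulmxA mxtrace_mulC !mulmxA -(mulmxA _ R R) hRR.
  by rewrite hPP.
have hb1 : \tr (adjmx Y1 *m Y1) = b.
  rewrite /Y1 adjmxM hPa hSa mulmxA -(mulmxA S P P) hPP -(mulmxA S P S).
  by rewrite mxtrace_mulC -mulmxA hSS.
have hb2 : \tr (adjmx Y2 *m Y2) = b.
  rewrite /Y2 (adjmxM (O *m P) S) (adjmxM O P) hPa hSa !mulmxA -(mulmxA _ (adjmx O) O) unitary_adjL //.
  by rewrite mulmx1 -hb1 /Y1 adjmxM hPa hSa !mulmxA.
have ha0 : 0 <= a by rewrite -ha tr_gram_ge0.
have hb0 : 0 <= b by rewrite -hb1 -{2}(adjmxK Y1) tr_gram_ge0.
have hX : \tr (X *m adjmx X) <= a.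
  by rewrite -ha /X -(mulmxA W R P) frob_contr.
have key (Y : 'M[C]_n) : \tr (adjmx Y *m Y) = b ->
    `|\tr (X *m Y)| <= sqrtC a * sqrtC b.
  move=> hY; apply: le_trans (CS_tr X Y) _; rewrite hY.
  apply: ler_wpM2r; first by rewrite sqrtC_ge0.
  by rewrite ler_sqrtC ?nnegrE // tr_gram_ge0.
apply: le_trans (ler_normB _ _) _.
rewrite sqrtCM ?nnegrE // mulr_natl mulr2n.
by apply: lerD; apply: key.
Qed.
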